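(* For every $n\in\mathbb{N}$, $t\in(0,1)$, $\varepsilon\in(0,1)$ and $\ell\ge1$ there exists $\mu=\mu_{n,t,\varepsilon,\ell}>0$ such that for all $\gamma\ge0$, $\lambda\ge1$ the following holds: if $A,B\subset\mathbb{R}^n$ are $(\gamma,\ell,\lambda,\mu)$ conelike with associated convex sets $C_A,C_B$, then $$tA+(1-t)B\supset t(1-\varepsilon/4)C_A+(1-t)C_B.$$
   Context: Scalar multiples of sets are dilations about the origin, $X+Y$ is the Minkowski sum, $o$ the origin, $B(p,r)$ the open Euclidean ball, $|\cdot|$ Lebesgue measure. A convex set $C\subset\mathbb{R}^n$ is a cone if there are a hyperplane $H$ not containing the origin and a bounded convex set $P\subset H$ with $C=\bigcup_{s\ge0}sP$. Sets $A,B\subset\mathbb{R}^n$ are called $(\gamma,\ell,\lambda,\mu)$ conelike if there exist convex sets $C_A\supset A$, $C_B\supset B$ with $|C_A|=|C_B|=(1+\gamma)|A|=(1+\gamma)|B|$, a convex set $K$, and a set $S''$ obtained by intersecting a cone with a half-space, such that: (1) $B(o,1/\ell)\subset C_A,C_B\subset B(o,\ell)$; (2) for some $z\in\mathbb{R}^n$, each of $A-z$, $C_A-z$, $B-z$, $C_B-z$ contains $S''$ and is contained in $\lambda S''$; (3) for some $x,y\in\mathbb{R}^n$, each of $A+x$, $C_A+x$, $B+y$, $C_B+y$ contains $K$ and is contained in $(1+\mu)K$. *)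

(* Defs.v *)
From HB Require Import structures.
From mathcomp Require Import all_boot all_order all_algebra.
From mathcomp Require Import all_classical all_reals all_analysis.
Set Implicit Arguments. Unset Strict Implicit. Unset Printing Implicit Defensive.
Import Order.TTheory GRing.Theory Num.Theory.
Local Open Scope classical_set_scope.
Local Open Scope ring_scope.

Section Defs.
Context {R : realType} {n : nat}.
Notation V := 'rV[R]_n.

Definition dotv (u v : V) : R := \sum_(i < n) u ord0 i * v ord0 i.
Definition enorm (u : V) : R := Num.sqrt (dotv u u).

Definition eball (p : V) (r : R) : set V := [set x | enorm (x - p) < r].

Definition dil (s : R) (X : set V) : set V := [set s *: x | x in X].
Definition minksum (X Y : set V) : set V := [set x + y | x in X & y in Y].
Definition transl (X : set V) (z : V) : set V := [set x + z | x in X].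

Definition convexv (X : set V) : Prop :=
  forall x y, X x -> X y -> forall s : R, 0 <= s <= 1 -> X (s *: x + (1 - s) *: y).

Definition boundedv (X : set V) : Prop := exists M : R, forall x, X x -> enorm x <= M.

Definition rbox (a b : V) : set V :=
  [set x | forall i : 'I_n, a ord0 i <= x ord0 i <= b ord0 i].
Definition boxvol (a b : V) : R := \prod_(i < n) Num.max 0 (b ord0 i - a ord0 i).
Definition lebm (X : set V) : \bar R :=
  ereal_inf [set s : \bar R | exists a b : nat -> V,
    X `<=` \bigcup_k rbox (a k) (b k) /\
    s = (\sum_(0 <= k <oo) (boxvol (a k) (b k))%:E)%E].

Definition leb_measurable (A : set V) : Prop :=
  forall E : set V, lebm E = (lebm (E `&` A) + lebm (E `\` A))%E.

Definition is_cone (C : set V) : Prop :=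
  convexv C /\
  exists (v : V) (c : R) (P : set V),
    v != 0 /\ c != 0 /\ P `<=` [set x | dotv v x = c] /\
    boundedv P /\ convexv P /\
    C = \bigcup_(s in [set s : R | 0 <= s]) dil s P.

Definition halfspace (Hs : set V) : Prop :=
  exists (w : V) (c : R), w != 0 /\ Hs = [set x | dotv w x <= c].

Definition conelike (gamma ell lambda mu : R) (A B CA CB : set V) : Prop :=
  convexv CA /\ convexv CB /\ A `<=` CA /\ B `<=` CB /\
  lebm CA = ((1 + gamma)%:E * lebm A)%E /\ lebm CB = ((1 + gamma)%:E * lebm B)%E /\
  lebm A = lebm B /\
  exists (K S2 : set V),
    convexv K /\
    (exists C Hs, is_cone C /\ halfspace Hs /\ S2 = C `&` Hs) /\
    (* (1) *)
    eball 0 ell^-1 `<=` CA /\ eball 0 ell^-1 `<=` CB /\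
    CA `<=` eball 0 ell /\ CB `<=` eball 0 ell /\
    (* (2) *)
    (exists z : V, forall X, (X = A \/ X = CA \/ X = B \/ X = CB) ->
        S2 `<=` transl X (- z) /\ transl X (- z) `<=` dil lambda S2) /\
    (* (3) *)
    (exists x y : V,
        (forall X, (X = A \/ X = CA) -> K `<=` transl X x /\ transl X x `<=` dil (1 + mu) K) /\
        (forall X, (X = B \/ X = CB) -> K `<=` transl X y /\ transl X y `<=` dil (1 + mu) K)).

End Defs.

(* Main.v *)
Require Import Defs.
From HB Require Import structures.
From mathcomp Require Import all_boot all_order all_algebra.
From mathcomp Require Import all_classical all_reals all_analysis.
From mathcomp Require Import ring lra.
Import Order.TTheory GRing.Theory Num.Theory.
Local Open Scope classical_set_scope.
Local Open Scope ring_scope.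

Section Aux.
Context {R : realType} {n : nat}.
Notation V := 'rV[R]_n.

Lemma Q_ge0 (v : V) : 0 <= dotv v v.
Proof. by apply: sumr_ge0 => i _; rewrite -expr2 sqr_ge0. Qed.

Lemma QZ (a : R) (v : V) : dotv (a *: v) (a *: v) = a ^+ 2 * dotv v v.
Proof.
rewrite /dotv mulr_sumr; apply: eq_bigr => i _; rewrite !mxE; ring.
Qed.

Lemma QD (u v : V) : dotv (u + v) (u + v) <= 2 * dotv u u + 2 * dotv v v.
Proof.
rewrite /dotv !mulr_sumr -big_split /=; apply: ler_sum => i _; rewrite !mxE.
have := sqr_ge0 (u ord0 i - v ord0 i); rewrite expr2 => h; nra.
Qed.

Lemma enorm_lt (v : V) (r : R) : 0 < r -> (enorm v < r) <-> (dotv v v < r ^+ 2).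
Proof.
move=> r0; rewrite /enorm.
have -> : r = Num.sqrt (r ^+ 2) by rewrite sqrtr_sqr ger0_norm // ltW.
rewrite ltr_sqrt ?exprn_gt0 //; rewrite sqrtr_sqr ger0_norm ?ltW //.
Qed.

Lemma bern (m : R) (N : nat) : 0 <= m -> 1 + N%:R * m <= (1 + m) ^+ N.
Proof.
move=> m0; elim: N => [|N IH]; first by rewrite mul0r addr0 expr0.
rewrite exprS -natr1.
have h : 0 <= N%:R * m by apply: mulr_ge0.
have h2 : (1 + N%:R * m) * (1 + m) <= (1 + m) ^+ N * (1 + m) by rewrite ler_pM2r //; lra.
have h3 : 0 <= N%:R * m * m by apply: mulr_ge0.
nra.
Qed.
End Aux.

Theorem mainTheorem14 (R : realType) (n : nat) (t eps ell : R) :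
  0 < t < 1 -> 0 < eps < 1 -> 1 <= ell ->
  exists mu : R, 0 < mu /\
    forall (gamma lambda : R), 0 <= gamma -> 1 <= lambda ->
    forall A B CA CB : set 'rV[R]_n,
      leb_measurable A -> leb_measurable B ->
      conelike gamma ell lambda mu A B CA CB ->
      minksum (dil (t * (1 - eps / 4)) CA) (dil (1 - t) CB)
        `<=` minksum (dil t A) (dil (1 - t) B).
Proof.
move=> /andP[t0 t1] /andP[e0 e1] ell1.
set d := t * eps / 4.
have d0 : 0 < d by rewrite /d; apply: divr_gt0 => //; apply: mulr_gt0.
have te : t * eps < 1 by nra.
have d1 : d < 1 by rewrite /d; lra.
set W := 1 + 2 / d.
have W1 : 1 <= W by rewrite /W lerDl; apply: divr_ge0 => //; lra.
have W2 : 2 / d <= W by rewrite /W; lra.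
set D := 4 * W * ell ^+ 2.
set N := (Num.truncn D).+1.
have DN : D < N%:R by apply: truncnS_gt.
have D1 : 1 <= D.
  rewrite /D; have : 1 <= ell ^+ 2 by rewrite expr2; nra.
  nra.
have N0 : 0 < N%:R :> R by lra.
set mu := (N%:R : R)^-1.
have mu0 : 0 < mu by rewrite /mu invr_gt0.
have muD : mu * D < 1 by rewrite /mu ltr_pdivrMl // mulr1.
have N1 : 1 <= N%:R :> R by lra.
have mu1 : mu <= 1 by rewrite /mu invf_le1.
have Nmu : N%:R * mu = 1 by rewrite /mu divff //; lra.
exists mu; split => // gamma lambda _ _ A B CA CB _ _.
move=> [_ [_ [_ [_ [_ [_ [_ [K [S2 [HK [_ [HbA [_ [HA [HB [_ [x [y [HX HY]]]]]]]]]]]]]]]]]]].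
have [HKA _] := HX A (or_introl erefl).
have [HKCA HCAK] := HX CA (or_intror erefl).
have [HKB _] := HY B (or_introl erefl).
have [_ HCBK] := HY CB (or_intror erefl).
have mu10 : 0 < 1 + mu by lra.
have mu1n : 1 + mu != 0 by rewrite gt_eqF.
have L1 : forall v, CA v -> exists2 k, K k & (1 + mu) *: k = v + x.
  by move=> v Hv; have [k Hk <-] := HCAK (v + x) (ex_intro2 _ _ v Hv erefl); exists k.
have L1B : forall v, CB v -> exists2 k, K k & (1 + mu) *: k = v + y.
  by move=> v Hv; have [k Hk <-] := HCBK (v + y) (ex_intro2 _ _ v Hv erefl); exists k.
have Kx : forall k, K k -> exists2 a, CA a & a + x = k.
  by move=> k /HKCA [a Ha <-]; exists a.
have Kdown : forall k, K k -> K ((1 + mu)^-1 *: k).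
  move=> k /Kx [a Ha Hk]; have [k' Hk' Ek'] := L1 a Ha.
  by rewrite -Hk -Ek' scalerA mulVf // scale1r.
have ellp : 0 < ell by lra.
have ballK : forall u : 'rV[R]_n, dotv u u < ell^-1 ^+ 2 -> K ((1 + mu)^-1 *: (u + x)).
  move=> u Hu; have Hu' : CA u.
    apply: HbA; rewrite /eball /= subr0; apply/enorm_lt => //; rewrite invr_gt0 //.
  have [k Hk Ek] := L1 u Hu'.
  by rewrite -Ek scalerA mulVf // scale1r.
have CAb : forall a, CA a -> dotv a a < ell ^+ 2.
  by move=> a /HA; rewrite /eball /= subr0 => /enorm_lt; apply.
have xK : forall j : nat, K (((1 + mu) ^+ j.+1)^-1 *: x).
  elim => [|j IH].
    have := ballK 0; rewrite add0r expr1; apply.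
    by rewrite /dotv big1 ?exprn_gt0 ?invr_gt0 // => i _; rewrite mxE mul0r.
  by have := Kdown _ IH; rewrite scalerA -invfM -exprS.
have xb : dotv x x < 4 * ell ^+ 2.
  have [a Ha Ea] := Kx _ (xK (Num.truncn D)).
  set r := ((1 + mu) ^+ N)^-1 in Ea.
  have Pb : 2 <= (1 + mu) ^+ N by have := bern mu N (ltW mu0); rewrite Nmu.
  have rp : 0 < r by rewrite /r invr_gt0 exprn_gt0.
  have rh : r <= 2^-1 by rewrite /r lef_pV2 ?posrE ?exprn_gt0 //; lra.
  have Ea' : a = (r - 1) *: x by rewrite scalerBl scale1r -Ea addrK.
  have := CAb _ Ha; rewrite Ea' QZ => h.
  have hq : 4^-1 <= (r - 1) ^+ 2.
    have : (r - 1) ^+ 2 = (1 - r) * (1 - r) by rewrite expr2; ring.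
    move=> ->; have : 2^-1 <= 1 - r by lra.
    have : 2^-1 * 2^-1 = 4^-1 :> R by rewrite -invfM; congr (_^-1); lra.
    nra.
  have := Q_ge0 x; nra.
move=> p [_ [a Ha <-] [_ [b Hb <-] <-]].
have [k1 Hk1 E1] := L1 a Ha.
have [k2 Hk2 E2] := L1B b Hb.
have d1n : 1 - d != 0 by rewrite subr_eq0 gt_eqF.
have dn : d != 0 by rewrite gt_eqF.
set s := t * (1 - eps / 4) / (1 - d).
have s01 : 0 <= s <= 1.
  have h1 : 0 < 1 - d by lra.
  apply/andP; split; rewrite /s.
    apply: divr_ge0; last lra. apply: mulr_ge0; lra.
  rewrite ler_pdivrMr // mul1r /d; lra.
set m := s *: k1 + (1 - s) *: k2.
have Km : K m := HK k1 k2 Hk1 Hk2 s s01.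
have [a2 Ha2 E3] := Kx m Km.
set be := (1 + mu) * mu * (1 - d) / d.
set u := (mu + be) *: x + be *: a2.
set e := mu * W.
have be0 : 0 <= be.
  rewrite /be; apply: divr_ge0; [|lra]; apply: mulr_ge0; [nra|lra].
have beW' : be <= mu * (2 / d).
  rewrite /be.
  have -> : (1 + mu) * mu * (1 - d) / d = mu * ((1 + mu) * (1 - d)) / d by field.
  have h : mu * (2 / d) = mu * 2 / d by rewrite mulrA.
  rewrite h ler_pM2r ?invr_gt0 //; nra.
have beW : 0 <= be <= e.
  apply/andP; split => //; rewrite /e; nra.
have mbW : 0 <= mu + be <= e.
  apply/andP; split; first lra.
  rewrite /e /W mulrDr mulr1; lra.
have Qx0 := Q_ge0 x.
have Qa2 := CAb _ Ha2.
have Qa20 := Q_ge0 a2.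
have eg0 : 0 <= e by lra.
have hQu : dotv u u <= 2 * (mu + be) ^+ 2 * dotv x x + 2 * be ^+ 2 * dotv a2 a2.
  by have := QD ((mu + be) *: x) (be *: a2); rewrite !QZ !mulrA.
have hb1 : (mu + be) ^+ 2 <= e ^+ 2 by rewrite ler_pXn2r // ?nnegrE; lra.
have hb2 : be ^+ 2 <= e ^+ 2 by rewrite ler_pXn2r // ?nnegrE; lra.
have hQu2 : dotv u u <= 10 * e ^+ 2 * ell ^+ 2.
  have : (mu + be) ^+ 2 * dotv x x <= e ^+ 2 * (4 * ell ^+ 2).
    apply: ler_pM => //; [apply: sqr_ge0|lra].
  have : be ^+ 2 * dotv a2 a2 <= e ^+ 2 * ell ^+ 2.
    apply: ler_pM => //; [apply: sqr_ge0|lra].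
  lra.
have Hu : dotv u u < ell^-1 ^+ 2.
  set f := e * ell ^+ 2.
  have f0 : 0 <= f by rewrite /f; apply: mulr_ge0 => //; apply: sqr_ge0.
  have f4 : 4 * f < 1.
    have h : mu * D = 4 * f by rewrite /f /e /D; ring.
    by rewrite -h.
  have ell2 : 0 < ell ^+ 2 by rewrite exprn_gt0.
  have ell2n : ell ^+ 2 != 0 by rewrite gt_eqF.
  have hh : 10 * e ^+ 2 * ell ^+ 2 = (10 * f ^+ 2) / ell ^+ 2.
    by rewrite /f; field; rewrite gt_eqF.
  rewrite hh in hQu2.
  apply: (le_lt_trans hQu2); rewrite exprVn -[X in _ < X]mul1r ltr_pM2r ?invr_gt0 //; nra.
have Kz := ballK u Hu.
have d01 : 0 <= 1 - d <= 1 by apply/andP; split; lra.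
have Kq := HK _ _ Km Kz (1 - d) d01.
have [a' Ha' E4] := HKA _ Kq.
have [b' Hb' E5] := HKB _ Kq.
exists (t *: a'); first by exists a'.
exists ((1 - t) *: b'); first by exists b'.
have Ea' : a' = ((1 - d) *: m + (1 - (1 - d)) *: ((1 + mu)^-1 *: (u + x))) - x by rewrite -E4 addrK.
have Eb' : b' = ((1 - d) *: m + (1 - (1 - d)) *: ((1 + mu)^-1 *: (u + x))) - y by rewrite -E5 addrK.
have Ea : a = (1 + mu) *: k1 - x by rewrite E1 addrK.
have Eb : b = (1 + mu) *: k2 - y by rewrite E2 addrK.
have Ea2 : a2 = m - x by rewrite -E3 addrK.
rewrite Ea' Eb' Ea Eb /u Ea2 /m /be /s /d.
apply/matrixP => i j; rewrite !mxE.
field.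
by apply/and4P; split => //; rewrite gt_eqF //; nra.
Qed.
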